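(* Let $\rho$ be a $3$-dimensional continuous representation of $\mathcal{G}_{\mathbb{Q}_p}$ over $\overline{\mathbb{F}_p}$ of the form $\begin{psmallmatrix}\chi_1&\delta_a&\epsilon\\&\chi_2&\delta_b\\&&\chi_3\end{psmallmatrix}$ in a basis $e_1,e_2,e_3$, with characters $\chi_1,\chi_2,\chi_3$ satisfying $\chi_i\chi_j^{-1}\notin\{1,\omega,\omega^{-1}\}$ for $i\neq j$. Then $\Lambda^2\rho$ has length $3$ with a composition series whose successive factors (from sub to quotient) are $\chi_1\chi_2$, $\chi_1\chi_3$, $\chi_2\chi_3$. Moreover the socle (resp. cosocle) of $\Lambda^2\rho$ has the same dimension as the cosocle (resp. socle) of $\rho$.
   Context: $\omega$ is the mod $p$ cyclotomic character of $\mathcal{G}_{\mathbb{Q}_p}$; $\delta_a,\delta_b,\epsilon$ denote the off-diagonal entries of the matrix representation. *)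

(* Defs.v *)
From HB Require Import structures.
From mathcomp Require Import all_boot all_order all_algebra all_field.
From mathcomp Require Import monoid.
Set Implicit Arguments. Unset Strict Implicit. Unset Printing Implicit Defensive.
Import GRing.Theory.
Local Open Scope ring_scope.

(* Representations are matrix-valued, column-vector convention:
   rho g acts on column vectors v |-> rho g *m v, and rho (g*h) = rho g *m rho h.
   Subspaces of F^n are encoded as row spaces (mxalgebra) of n x n matrices
   whose rows are the (transposed) vectors; rho g then acts on a row u by
   u |-> u *m (rho g)^T. *)

Section Reps.
Variables (G : groupType) (F : fieldType).

Definition is_rep n (rho : G -> 'M[F]_n) :=
  rho 1%g = 1%:M /\ forall g h, rho (g * h)%g = rho g *m rho h.

Definition is_char (chi : G -> F) :=
  chi 1%g = 1 /\ forall g h, chi (g * h)%g = chi g * chi h.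

Variables (n : nat) (rho : G -> 'M[F]_n).

Definition invariant (U : 'M[F]_n) := forall g, (U *m (rho g)^T <= U)%MS.

Definition simple_sub (U : 'M[F]_n) :=
  [/\ invariant U, (U != (0 : 'M[F]_n))%MS &
      forall W : 'M[F]_n, invariant W -> (W <= U)%MS -> (W == (0 : 'M[F]_n))%MS \/ (W == U)%MS].

Definition maximal_sub (U : 'M[F]_n) :=
  [/\ invariant U, ~~ (1%:M <= U)%MS &
      forall W : 'M[F]_n, invariant W -> (U <= W)%MS -> (W == U)%MS \/ (1%:M <= W)%MS].

Definition is_socle (S : 'M[F]_n) :=
  (forall U, simple_sub U -> (U <= S)%MS) /\
  exists s : seq 'M[F]_n,
    (forall U, U \in s -> simple_sub U) /\ (S == \sum_(U <- s) U)%MS.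

(* R is the radical: the intersection of all maximal proper subrepresentations;
   the cosocle is the quotient by R, of dimension n - \rank R *)
Definition is_radical (R : 'M[F]_n) :=
  (forall M, maximal_sub M -> (R <= M)%MS) /\
  exists s : seq 'M[F]_n,
    (forall M, M \in s -> maximal_sub M) /\ (R == \bigcap_(M <- s) M)%MS.

Definition socle_dim (d : nat) :=
  exists S, is_socle S /\ \rank S = d.

Definition cosocle_dim (d : nat) :=
  exists R, is_radical R /\ (n - \rank R)%N = d.

Definition char_factor (V' V : 'M[F]_n) (chi : G -> F) :=
  [/\ invariant V', invariant V, (V' <= V)%MS, \rank V = (\rank V').+1 &
      forall g, (V *m (rho g)^T - chi g *: V <= V')%MS].
End Reps.

(* The basis e1^e2, e1^e3, e2^e3 of Lambda^2 F^3 *)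
Definition wedge_idx (i : 'I_3) : 'I_3 * 'I_3 :=
  match val i with
  | 0 => (0, 1)
  | 1 => (0, 2)
  | _ => (1, 2)
  end%R.

(* matrix of Lambda^2 A in the basis above (column convention):
   A e_k ^ A e_l = sum_{i<j} (A_ik A_jl - A_il A_jk) e_i ^ e_j *)
Definition wedge2 (F : comNzRingType) (A : 'M[F]_3) : 'M[F]_3 :=
  \matrix_(r < 3, c < 3)
    (A (wedge_idx r).1 (wedge_idx c).1 * A (wedge_idx r).2 (wedge_idx c).2
     - A (wedge_idx r).1 (wedge_idx c).2 * A (wedge_idx r).2 (wedge_idx c).1).

Definition generic_pair (G : groupType) (F : fieldType) (omega a b : G -> F) :=
  [/\ (fun g => a g / b g) <> (fun _ => 1),
      (fun g => a g / b g) <> omega &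
      (fun g => a g / b g) <> (fun g => (omega g)^-1)].

(* Main.v *)
Require Import Defs.
From HB Require Import structures.
From mathcomp Require Import all_boot all_order all_algebra all_field.
From mathcomp Require Import monoid.
From mathcomp Require Import ring.
Set Implicit Arguments. Unset Strict Implicit. Unset Printing Implicit Defensive.
Import GRing.Theory.
Local Open Scope ring_scope.


Record dual_pair (G : groupType) (F : fieldType) n (sg tau : G -> 'M[F]_n)
   (phi psi : 'M[F]_n -> 'M[F]_n) : Prop := DualPair {
  dp_phiS : forall U V, (U <= V)%MS -> (phi V <= phi U)%MS;
  dp_psiS : forall U V, (U <= V)%MS -> (psi V <= psi U)%MS;
  dp_phipsi : forall U, (phi (psi U) == U)%MS;
  dp_psiphi : forall U, (psi (phi U) == U)%MS;
  dp_phiI : forall U, Defs.invariant sg U -> Defs.invariant tau (phi U);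
  dp_psiI : forall U, Defs.invariant tau U -> Defs.invariant sg (psi U);
  dp_phiR : forall U, \rank (phi U) = (n - \rank U)%N;
  dp_psiR : forall U, \rank (psi U) = (n - \rank U)%N }.

Lemma dual_pair_sym G F n sg tau phi psi :
  @dual_pair G F n sg tau phi psi -> dual_pair tau sg psi phi.
Proof. by case=> *; constructor. Qed.


Lemma dp_phi0 (G : groupType) (F : fieldType) (n : nat) (sg tau : G -> 'M[F]_n) (phi psi : 'M[F]_n -> 'M[F]_n) : dual_pair sg tau phi psi -> (1%:M <= phi (0 : 'M[F]_n))%MS.
Proof.
case=> phS psS php _ _ _ _ _.
have /andP[_ h] := php 1%:M.
apply: submx_trans h _; apply: phS; exact: sub0mx.
Qed.

Lemma dp_phi1 (G : groupType) (F : fieldType) (n : nat) (sg tau : G -> 'M[F]_n) (phi psi : 'M[F]_n -> 'M[F]_n) : dual_pair sg tau phi psi -> (phi 1%:M <= (0 : 'M[F]_n))%MS.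
Proof.
case=> phS psS php _ _ _ _ _.
have /andP[h _] := php 0.
apply: submx_trans _ h; apply: phS; exact: submx1.
Qed.

Lemma dp_simple_max (G : groupType) (F : fieldType) (n : nat) (sg tau : G -> 'M[F]_n) (phi psi : 'M[F]_n -> 'M[F]_n) U : dual_pair sg tau phi psi ->
  simple_sub sg U -> maximal_sub tau (phi U).
Proof.
move=> dp; have p0 := dp_phi0 dp; have p1 := dp_phi1 (dual_pair_sym dp).
case: dp => phS psS php psp phI psI _ _ [iU nz hU]; split.
- exact: phI.
- apply/negP=> h; move/negP: nz; apply.
  rewrite -submx0.
  have /andP[_ h2] := psp U.
  apply: submx_trans h2 _.
  by apply: submx_trans (psS _ _ h) p1.
- move=> W iW sW.
  have /andP[_ h2] := psp U.
  have : (psi W <= U)%MS by apply: submx_trans (psS _ _ sW) _; have /andP[] := psp U.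
  case/(hU _ (psI _ iW)) => /andP[a b].
  + right; have /andP[h3 _] := php W.
    apply: submx_trans p0 _; exact: submx_trans (phS _ _ a) h3.
  + left; have /andP[h3 h4] := php W; apply/andP; split.
    * exact: submx_trans h4 (phS _ _ b).
    * exact: submx_trans (phS _ _ a) h3.
Qed.

Lemma dp_max_simple (G : groupType) (F : fieldType) (n : nat) (sg tau : G -> 'M[F]_n) (phi psi : 'M[F]_n -> 'M[F]_n) U : dual_pair sg tau phi psi ->
  maximal_sub tau U -> simple_sub sg (psi U).
Proof.
move=> dp; have p0 := dp_phi0 dp; have p1 := dp_phi1 (dual_pair_sym dp).
case: dp => phS psS php psp phI psI _ _ [iU nf hU]; split.
- exact: psI.
- apply/negP => /eqP h; move/negP: nf; apply.
  have /andP[h3 _] := php U; apply: submx_trans p0 _.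
  by rewrite -h.
- move=> W iW sW.
  have : (U <= phi W)%MS.
    by apply: submx_trans (phS _ _ sW); have /andP[] := php U.
  case/(hU _ (phI _ iW)) => [/andP[a b]|h].
  + right; have /andP[h3 h4] := psp W; apply/andP; split.
    * exact: submx_trans h4 (psS _ _ b).
    * exact: submx_trans (psS _ _ a) h3.
  + left; have /andP[h3 h4] := psp W; rewrite sub0mx andbT.
    exact: submx_trans h4 (submx_trans (psS _ _ h) p1).
Qed.

Section Gen2.
Variables (G : groupType) (F : fieldType) (n : nat) (sg tau : G -> 'M[F]_n)
   (phi psi : 'M[F]_n -> 'M[F]_n).
Hypothesis dp : dual_pair sg tau phi psi.

Lemma dp_eq A B : (A == B)%MS -> (phi A == phi B)%MS.
Proof. by case/andP=> h1 h2; apply/andP; split; apply: (dp_phiS dp). Qed.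

Lemma dp_add A B : (phi (A + B)%MS == phi A :&: phi B)%MS.
Proof.
case: dp => phS psS php psp _ _ _ _.
apply/andP; split.
  by rewrite sub_capmx !phS ?addsmxSl ?addsmxSr.
set C := (phi A :&: phi B)%MS.
have hA : (A <= psi C)%MS.
  have /andP[_ h] := psp A; exact: submx_trans h (psS _ _ (capmxSl _ _)).
have hB : (B <= psi C)%MS.
  have /andP[_ h] := psp B; exact: submx_trans h (psS _ _ (capmxSr _ _)).
have /andP[_ h] := php C; apply: submx_trans h _; apply: phS.
by rewrite addsmx_sub hA hB.
Qed.

Lemma dp_cap A B : (phi (A :&: B)%MS == phi A + phi B)%MS.
Proof.
case: dp => phS psS php psp _ _ _ _.
apply/andP; split; last first.
  by rewrite addsmx_sub !phS ?capmxSl ?capmxSr.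
set D := (phi A + phi B)%MS.
have hA : (psi D <= A)%MS.
  have /andP[h _] := psp A; exact: submx_trans (psS _ _ (addsmxSl _ _)) h.
have hB : (psi D <= B)%MS.
  have /andP[h _] := psp B; exact: submx_trans (psS _ _ (addsmxSr _ _)) h.
have /andP[h _] := php D; apply: submx_trans _ h; apply: phS.
by rewrite sub_capmx hA hB.
Qed.

Lemma dp_sum (s : seq 'M[F]_n) :
  (phi (\sum_(U <- s) U)%MS == \bigcap_(U <- map phi s) U)%MS.
Proof.
elim: s => [|U s IH].
  by rewrite !big_nil submx1 (dp_phi0 dp).
rewrite !big_cons.
have /andP[h1 h2] := dp_add U (\sum_(U <- s) U)%MS.
case/andP: IH => i1 i2.
apply/andP; split.
  apply: submx_trans h1 _; exact: capmxS.
apply: submx_trans h2; exact: capmxS.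
Qed.

Lemma dp_bigcap (s : seq 'M[F]_n) :
  (phi (\bigcap_(U <- s) U)%MS == \sum_(U <- map phi s) U)%MS.
Proof.
elim: s => [|U s IH].
  by rewrite !big_nil sub0mx andbT (dp_phi1 dp).
rewrite !big_cons.
have /andP[h1 h2] := dp_cap U (\bigcap_(U <- s) U)%MS.
case/andP: IH => i1 i2.
apply/andP; split.
  apply: submx_trans h1 _; exact: addsmxS.
apply: submx_trans h2; exact: addsmxS.
Qed.

Lemma dp_socle S : is_socle sg S -> is_radical tau (phi S).
Proof.
case=> hS [s [hs eS]]; split.
  move=> M hM; have := hS _ (dp_max_simple dp hM).
  move/(dp_phiS dp)=> h; apply: submx_trans h _.
  by have /andP[] := dp_phipsi dp M.
exists (map phi s); split.
  by move=> M /mapP[U Us ->]; apply: (dp_simple_max dp); apply: hs.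
have /andP[e1 e2] := dp_eq eS; have /andP[f1 f2] := dp_sum s.
apply/andP; split; [exact: submx_trans e1 f1 | exact: submx_trans f2 e2].
Qed.

Lemma dp_radical R : is_radical sg R -> is_socle tau (phi R).
Proof.
have dq := dual_pair_sym dp.
case=> hR [s [hs eR]]; split.
  move=> M hM; have := hR _ (dp_simple_max dq hM).
  move/(dp_phiS dp)=> h; apply: submx_trans _ h.
  by have /andP[] := dp_phipsi dp M.
exists (map phi s); split.
  by move=> M /mapP[U Us ->]; apply: (dp_max_simple dq); apply: hs.
have /andP[e1 e2] := dp_eq eR; have /andP[f1 f2] := dp_bigcap s.
apply/andP; split; [exact: submx_trans e1 f1 | exact: submx_trans f2 e2].
Qed.
End Gen2.

Lemma dp_dims (G : groupType) (F : fieldType) (n : nat) (sg tau : G -> 'M[F]_n)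
   (phi psi : 'M[F]_n -> 'M[F]_n) : dual_pair sg tau phi psi ->
  forall d, (socle_dim sg d <-> cosocle_dim tau d) /\
            (cosocle_dim sg d <-> socle_dim tau d).
Proof.
move=> dp d; have dq := dual_pair_sym dp; split; split.
- case=> S [hS <-]; exists (phi S); split; first by have := dp_socle dp hS.
  by rewrite (dp_phiR dp) subKn // rank_leq_col.
- case=> R [hR <-]; exists (psi R); split; first by have := dp_radical dq hR.
  by rewrite (dp_psiR dp).
- case=> R [hR <-]; exists (phi R); split; first by have := dp_radical dp hR.
  by rewrite (dp_phiR dp).
- case=> S [hS <-]; exists (psi S); split; first by have := dp_socle dq hS.
  by rewrite (dp_psiR dp) subKn // rank_leq_col.
Qed.


Definition Pm (F : fieldType) : 'M[F]_3 :=
  \matrix_(i, j) (if (i + j == 2)%N then (-1) ^+ i else 0).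

Lemma v0 : val (0%R : 'I_3) = 0%N. Proof. by []. Qed.
Lemma v1 : val (1%R : 'I_3) = 1%N. Proof. by []. Qed.
Lemma v2 : val (2%R : 'I_3) = 2%N. Proof. by []. Qed.

Lemma PmT F : (Pm F)^T = Pm F.
Proof.
apply/matrixP=> i j; rewrite !mxE.
by case: i => [[|[|[|//]]] ?]; case: j => [[|[|[|//]]] ?] /=; rewrite ?expr0 ?expr1 ?sqrrN ?expr1n.
Qed.

Lemma PmK F : Pm F *m Pm F = 1%:M.
Proof.
apply/matrixP=> i j; rewrite !mxE !big_ord_recr big_ord0 /= !mxE.
case: i => [[|[|[|//]]] ?]; case: j => [[|[|[|//]]] ?] /=;
  rewrite ?expr0 ?expr1 ?sqrrN ?expr1n; ring.
Qed.

Lemma key (F : fieldType) (A : 'M[F]_3) : A 1 0 = 0 -> A 2 0 = 0 -> A 2 1 = 0 ->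
  Pm F *m (wedge2 A)^T *m Pm F *m A = (A 0 0 * A 1 1 * A 2 2) *: 1%:M.
Proof.
pose a (i j : nat) := A (inord i) (inord j).
have AE : forall i j, A i j = a i j by move=> i j; rewrite /a !inord_val.
rewrite !AE !v0 !v1 !v2 => h10 h20 h21.
have m1 : (1 %% 3)%N = 1%N by [].
have m2 : ((1 %% 3 + 1 %% 3) %% 3)%N = 2%N by [].
apply/matrixP=> i j.
do 4 rewrite ?mxE ?big_ord_recr ?big_ord0 /=.
rewrite !AE /= ?v0 ?v1 ?v2 ?m1 ?m2.
case: i => [[|[|[|//]]] ?]; case: j => [[|[|[|//]]] ?] /=;
  rewrite ?m1 ?m2 ?h10 ?h20 ?h21 ?expr0 ?expr1 ?sqrrN ?expr1n; ring.
Qed.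


Lemma kerker (F : fieldType) n (B : 'M[F]_n) : (kermx (kermx B)^T == B^T)%MS.
Proof.
have s : (B^T <= kermx (kermx B)^T)%MS.
  by apply/sub_kermxP; rewrite -trmx_mul mulmx_ker trmx0.
have e := (mxrank_leqif_eq s).2.
have : (B^T == kermx (kermx B)^T)%MS.
  rewrite -e mxrank_ker !mxrank_tr mxrank_ker subKn ?rank_leq_row //.
  idtac.
by case/andP=> -> ->.
Qed.

Lemma kerS (F : fieldType) m n (U V : 'M[F]_(m, n)) :
  (U <= V)%MS -> (kermx V^T <= kermx U^T)%MS.
Proof.
case/submxP=> D ->; apply/sub_kermxP.
by rewrite trmx_mul mulmxA mulmx_ker mul0mx.
Qed.

Definition phiW (F : fieldType) (U : 'M[F]_3) := kermx (Pm F *m U^T).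
Definition psiW (F : fieldType) (U : 'M[F]_3) := kermx U^T *m Pm F.

Lemma Pm_unit (F : fieldType) : Pm F \in unitmx.
Proof. by case: (mulmx1_unit (PmK F)). Qed.

Lemma inst (G : groupType) (F : fieldType) (rho L : G -> 'M[F]_3) :
  is_rep rho ->
  (forall g, exists2 c, c != 0 & Pm F *m (L g)^T *m Pm F = c *: rho (g^-1)%g) ->
  dual_pair L rho (@phiW F) (@psiW F).
Proof.
move=> [r1 rM] hk.
have LT : forall g, exists2 c, c != 0 & (L g)^T = c *: (Pm F *m rho (g^-1)%g *m Pm F).
  move=> g; case: (hk g) => c c0 e; exists c => //.
  by rewrite scalemxAl scalemxAr -e !mulmxA PmK mul1mx -mulmxA PmK mulmx1.
have rinv : forall h, (rho h *m rho (h^-1)%g = 1%:M).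
  by move=> h; rewrite -rM mulgV r1.
constructor.
- move=> U V sUV; rewrite /phiW; apply/sub_kermxP.
  case/submxP: sUV => D ->; rewrite trmx_mul !mulmxA.
  by rewrite -(mulmxA _ (Pm F)) mulmx_ker mul0mx.
- move=> U V sUV; rewrite /psiW; apply: submxMr; exact: kerS.
- move=> U; rewrite /phiW /psiW trmx_mul PmT mulmxA PmK mul1mx.
  by have := kerker U^T; rewrite trmxK.
- move=> U; rewrite /phiW /psiW.
  have /eqmxP e := kerker (Pm F *m U^T).
  apply/eqmxP; apply: eqmx_trans (eqmxMr _ e) _.
  by rewrite trmx_mul trmxK PmT -mulmxA PmK mulmx1.
- move=> U iU g; rewrite /phiW; apply/sub_kermxP.
  case: (LT (g^-1)%g) => c c0 e.
  have := iU (g^-1)%g; rewrite e invgK -scalemxAr (eqmx_scale _ c0).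
  case/submxP=> D hD.
  have hD' : U *m Pm F *m rho g = D *m U *m Pm F.
    by rewrite -hD !mulmxA -(mulmxA _ (Pm F) (Pm F)) PmK mulmx1.
  set K := kermx _.
  have hK : K *m (Pm F *m U^T) = 0 := mulmx_ker _.
  rewrite -mulmxA.
  have -> : (rho g)^T *m (Pm F *m U^T) = (U *m Pm F *m rho g)^T.
    by rewrite !trmx_mul PmT mulmxA.
  rewrite hD' !trmx_mul PmT !mulmxA -(mulmxA K) hK mul0mx //.
- move=> W iW g; rewrite /psiW.
  case: (LT g) => c c0 e; rewrite e -scalemxAr.
  apply: scalemx_sub; rewrite !mulmxA -(mulmxA _ (Pm F) (Pm F)) PmK mulmx1; apply: submxMr.
  apply/sub_kermxP; case/submxP: (iW (g^-1)%g) => D hD.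
  have : rho (g^-1)%g *m W^T = W^T *m D^T by rewrite -trmx_mul -hD trmx_mul trmxK.
  by rewrite -mulmxA => ->; rewrite mulmxA mulmx_ker mul0mx.
- move=> U; rewrite /phiW mxrank_ker.
  by rewrite (eqmxMfull (U^T) (A:=Pm F) (etrans (row_full_unit _) (Pm_unit F))) mxrank_tr.
- move=> U; rewrite /psiW mxrankMfree ?row_free_unit ?Pm_unit //.
  by rewrite mxrank_ker mxrank_tr.
Qed.


Lemma wedge_facts (F : fieldType) (A : 'M[F]_3) :
  A 1 0 = 0 -> A 2 0 = 0 -> A 2 1 = 0 ->
  [/\ (pid_mx 1 : 'M[F]_3) *m (wedge2 A)^T = (A 0 0 * A 1 1) *: pid_mx 1,
      ((pid_mx 2 : 'M[F]_3) *m (wedge2 A)^T - (A 0 0 * A 2 2) *: pid_mx 2) *m pid_mx 1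
        = (pid_mx 2 : 'M[F]_3) *m (wedge2 A)^T - (A 0 0 * A 2 2) *: pid_mx 2,
      ((pid_mx 2 : 'M[F]_3) *m (wedge2 A)^T) *m pid_mx 2 = (pid_mx 2 : 'M[F]_3) *m (wedge2 A)^T &
      ((wedge2 A)^T - (A 1 1 * A 2 2) *: 1%:M) *m pid_mx 2 = (wedge2 A)^T - (A 1 1 * A 2 2) *: 1%:M].
Proof.
pose a (i j : nat) := A (inord i) (inord j).
have AE : forall i j, A i j = a i j by move=> i j; rewrite /a !inord_val.
rewrite !AE !v0 !v1 !v2 => h10 h20 h21.
have m1 : (1 %% 3)%N = 1%N by [].
have m2 : ((1 %% 3 + 1 %% 3) %% 3)%N = 2%N by [].
split; apply/matrixP=> i j;
do 4 rewrite ?mxE ?big_ord_recr ?big_ord0 /=;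
rewrite !AE /= ?v0 ?v1 ?v2 ?m1 ?m2;
case: i => [[|[|[|//]]] ?]; case: j => [[|[|[|//]]] ?] /=;
  rewrite ?m1 ?m2 ?h10 ?h20 ?h21 ?mulr1n ?mulr0n; ring.
Qed.

Lemma sub_pid (F : fieldType) r (X : 'M[F]_3) : X *m (pid_mx r : 'M[F]_3) = X -> (X <= (pid_mx r : 'M[F]_3))%MS.
Proof. by move=> <-; apply: submxMl. Qed.

Lemma char_nz (G : groupType) (F : fieldType) (chi : G -> F) g : is_char chi -> chi g != 0.
Proof.
case=> c1 cM; apply/eqP=> h; have := cM g (g^-1)%g.
by rewrite mulgV c1 h mul0r => /eqP; rewrite oner_eq0.
Qed.

Theorem mainTheorem10 (G : groupType) (F : closedFieldType) (p : nat)
  (hp : prime p) (hcharF : p \in [pchar F])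
  (omega : G -> F) (homega : is_char omega)
  (rho : G -> 'M[F]_3) (hrho : is_rep rho)
  (chi1 chi2 chi3 : G -> F)
  (hchi1 : is_char chi1) (hchi2 : is_char chi2) (hchi3 : is_char chi3)
  (hform : forall g : G,
     [/\ rho g 0 0 = chi1 g, rho g 1 1 = chi2 g & rho g 2 2 = chi3 g] /\
     [/\ rho g 1 0 = 0, rho g 2 0 = 0 & rho g 2 1 = 0])
  (h12 : generic_pair omega chi1 chi2) (h21 : generic_pair omega chi2 chi1)
  (h13 : generic_pair omega chi1 chi3) (h31 : generic_pair omega chi3 chi1)
  (h23 : generic_pair omega chi2 chi3) (h32 : generic_pair omega chi3 chi2) :
  let L := fun g : G => wedge2 (rho g) in
  [/\ exists V1 V2 : 'M[F]_3,
        [/\ char_factor L 0 V1 (fun g => chi1 g * chi2 g),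
            char_factor L V1 V2 (fun g => chi1 g * chi3 g) &
            char_factor L V2 1%:M (fun g => chi2 g * chi3 g)],
      (forall d : nat, socle_dim L d <-> cosocle_dim rho d) &
      (forall d : nat, cosocle_dim L d <-> socle_dim rho d)].
Proof.
move=> L.
have hk : forall g, exists2 c, c != 0 & Pm F *m (L g)^T *m Pm F = c *: rho (g^-1)%g.
  move=> g; case: (hform g) => [[d0 d1 d2] [z1 z2 z3]].
  exists (rho g 0 0 * rho g 1 1 * rho g 2 2).
    by rewrite d0 d1 d2 !mulf_neq0 // char_nz.
  case: hrho => r1 rM.
  rewrite -[LHS]mulmx1 -r1 -(mulgV g) rM mulmxA key // -scalemxAl mul1mx //.
have dp := inst hrho hk.
split; last first.
- by move=> d; case: (dp_dims dp d).
- by move=> d; case: (dp_dims dp d).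
have WF : forall g, [/\ (pid_mx 1 : 'M[F]_3) *m (L g)^T = (chi1 g * chi2 g) *: pid_mx 1,
      ((pid_mx 2 : 'M[F]_3) *m (L g)^T - (chi1 g * chi3 g) *: pid_mx 2) *m pid_mx 1
        = (pid_mx 2 : 'M[F]_3) *m (L g)^T - (chi1 g * chi3 g) *: pid_mx 2,
      ((pid_mx 2 : 'M[F]_3) *m (L g)^T) *m pid_mx 2 = (pid_mx 2 : 'M[F]_3) *m (L g)^T &
      ((L g)^T - (chi2 g * chi3 g) *: 1%:M) *m pid_mx 2 = (L g)^T - (chi2 g * chi3 g) *: 1%:M].
  move=> g; case: (hform g) => [[d0 d1 d2] [z1 z2 z3]].
  by have := wedge_facts z1 z2 z3; rewrite d0 d1 d2.
have i1 : Defs.invariant L (pid_mx 1).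
  by move=> g; case: (WF g) => -> _ _ _; apply: scalemx_sub.
have i2 : Defs.invariant L (pid_mx 2).
  by move=> g; case: (WF g) => _ _ <- _; apply: submxMl.
have s12 : ((pid_mx 1 : 'M[F]_3) <= (pid_mx 2 : 'M[F]_3))%MS.
  by apply: sub_pid; rewrite mul_pid_mx.
exists (pid_mx 1), (pid_mx 2); split; split => //.
- by move=> g; rewrite mul0mx.
- exact: sub0mx.
- by rewrite rank_pid_mx // mxrank0.
- by move=> g; case: (WF g) => -> _ _ _; rewrite subrr.
- by rewrite !rank_pid_mx.
- by move=> g; case: (WF g) => _ <- _ _; apply: submxMl.
- by move=> g; rewrite mul1mx submx1.
- exact: submx1.
- by rewrite rank_pid_mx // mxrank1.
- by move=> g; rewrite mul1mx; case: (WF g) => _ _ _ <-; apply: submxMl.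
Qed.
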